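(* Let $\delta\ge 3$ and $n\ge 8\delta-7$ be integers. Then $$\rho_{\mathcal D}\big(K_2\vee(K_{n-\delta-1}\cup K_{\delta-1})\big)\ >\ \rho_{\mathcal D}\big(K_\delta\vee(K_{n-2\delta+1}\cup(\delta-1)K_1)\big).$$
   Context: For a connected graph $G$, $\mathcal D(G)$ is its distance matrix (entry $(i,j)$ is the distance between the $i$-th and $j$-th vertices) and $\rho_{\mathcal D}(G)$ its largest eigenvalue. $K_m$ is the complete graph on $m$ vertices, $tK_1$ the edgeless graph on $t$ vertices, $\cup$ disjoint union, and $\vee$ the join. *)

(* Defs.v *)
From HB Require Import structures.
From mathcomp Require Import all_boot all_order all_algebra.
From mathcomp Require Import reals.
Set Implicit Arguments. Unset Strict Implicit. Unset Printing Implicit Defensive.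
Import Order.TTheory GRing.Theory Num.Theory.
Local Open Scope ring_scope.

(* A simple graph is a symmetric irreflexive relation e : rel T on a finType T. *)

Definition complete_graph (m : nat) : rel 'I_m := fun x y => x != y.
Definition edgeless_graph (t : nat) : rel 'I_t := fun _ _ => false.

Definition gunion (T1 T2 : finType) (e1 : rel T1) (e2 : rel T2) : rel (T1 + T2)%type :=
  fun x y => match x, y with
             | inl a, inl b => e1 a b
             | inr a, inr b => e2 a b
             | _, _ => false
             end.

Definition gjoin (T1 T2 : finType) (e1 : rel T1) (e2 : rel T2) : rel (T1 + T2)%type :=
  fun x y => match x, y with
             | inl a, inl b => e1 a b
             | inr a, inr b => e2 a b
             | _, _ => true
             end.

Fixpoint walk_le (T : finType) (e : rel T) (k : nat) (x y : T) : bool :=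
  match k with
  | 0 => x == y
  | k'.+1 => walk_le e k' x y || [exists z, walk_le e k' x z && e z y]
  end.

(* Graph distance: least k with a walk of length <= k from x to y
   (for connected graphs this is the usual shortest-path distance,
    since every distance is < #|T|). *)
Definition gdist (T : finType) (e : rel T) (x y : T) : nat :=
  find (fun k => walk_le e k x y) (iota 0 #|T|).

Definition dist_matrix (R : pzRingType) (T : finType) (e : rel T) : 'M[R]_#|T| :=
  \matrix_(i, j) (gdist e (enum_val i) (enum_val j))%:R.

Definition is_largest_eigenvalue (R : realType) (n : nat) (A : 'M[R]_n) (a : R) : Prop :=
  eigenvalue A a /\ (forall b, eigenvalue A b -> b <= a).

Arguments complete_graph m : clear implicits.
Arguments edgeless_graph t : clear implicits.

(* Main.v *)
Require Import Defs.
From HB Require Import structures.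
From mathcomp Require Import all_boot all_order all_algebra.
From mathcomp Require Import reals.
From mathcomp Require Import ring lra zify.
From mathcomp Require Import polyrcf.
Import Order.TTheory GRing.Theory Num.Theory.
Local Open Scope ring_scope.

Set Implicit Arguments. Unset Strict Implicit. Unset Printing Implicit Defensive.

Lemma perron (R : realType) m (A : 'M[R]_m) (u : 'rV[R]_m) a (j0 : 'I_m) :
  (forall i j, 0 <= A i j) -> (forall i j, A i j = A j i) ->
  (forall j, 0 < u 0 j) -> u *m A = a *: u -> is_largest_eigenvalue A a.
Proof.
move=> A0 As u0 hu; split.
  apply/eigenvalueP; exists u => //; apply/eqP => ue.
  by have := u0 j0; rewrite ue mxE ltxx.
move=> b /eigenvalueP [w hw wn0].
pose S := \sum_j `|w 0 j| * u 0 j.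
have S0 : 0 < S.
  have [j wj] : exists j, w 0 j != 0.
    apply/existsP; apply: contraR wn0 => /existsPn H.
    apply/eqP/rowP => j; rewrite mxE; have := H j; rewrite negbK => /eqP ->.
    by case: j => -[].
  rewrite /S (bigD1 j) //=; apply: ltr_wpDr.
    by apply: sumr_ge0 => i _; apply: mulr_ge0 => //; apply: ltW.
  by apply: mulr_gt0 => //; rewrite normr_gt0.
have key j : `|b| * `|w 0 j| <= \sum_i `|w 0 i| * A i j.
  have := congr1 (fun M : 'rV_m => M 0 j) hw; rewrite !mxE => e.
  rewrite -normrM -e; apply: le_trans (ler_norm_sum _ _ _) _.
  by apply: ler_sum => i _; rewrite normrM (ger0_norm (A0 _ _)).
have : `|b| * S <= a * S.
  rewrite /S mulr_sumr.
  apply: le_trans (_ : \sum_j (\sum_i `|w 0 i| * A i j) * u 0 j <= _).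
    apply: ler_sum => j _; rewrite mulrA; apply: ler_wpM2r; first exact: ltW.
    exact: key.
  under eq_bigr do rewrite mulr_suml.
  rewrite exchange_big /= mulr_sumr le_eqVlt; apply/orP; left; apply/eqP/eq_bigr => i _.
  have := congr1 (fun M : 'rV_m => M 0 i) hu; rewrite !mxE => e.
  rewrite mulrCA -e mulr_sumr; apply: eq_bigr => j _.
  by rewrite As; ring.
rewrite ler_pM2r // => h; exact: le_trans (ler_norm _) h.
Qed.

Set Implicit Arguments. Unset Strict Implicit. Unset Printing Implicit Defensive.

Lemma ex1 (T : finType) (e : rel T) x y : [exists z, (x == z) && e z y] = e x y.
Proof.
apply/existsP/idP => [[z /andP[/eqP-> ->]] //| h].
by exists x; rewrite eqxx h.
Qed.

Definition dd (T : finType) (e : rel T) (x y : T) : nat :=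
  if x == y then 0 else if e x y then 1 else 2.

Lemma gdist_char (T : finType) (e : rel T) x y : (2 < #|T|)%N ->
  (x != y -> ~~ e x y -> exists z, e x z && e z y) -> gdist e x y = dd e x y.
Proof.
rewrite /gdist /dd; case: #|T| => [|[|[|N]]] // _ H.
rewrite /= ex1.
case: eqP => [E|/eqP xy] //=.
case exy: (e x y) => //=.
under eq_existsb => z do rewrite ex1.
have [z /andP[h1 h2]] := H xy (negbT exy).
have -> : [exists z0, ((x == z0) || e x z0) && e z0 y] by apply/existsP; exists z; rewrite h1 h2 orbT.
by [].
Qed.

Set Implicit Arguments. Unset Strict Implicit. Unset Printing Implicit Defensive.
Lemma eq_inl (A B : eqType) (a b : A) : (inl a == inl b :> A + B) = (a == b).
Proof. by []. Qed.
Lemma eq_inr (A B : eqType) (a b : B) : (inr a == inr b :> A + B) = (a == b).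
Proof. by []. Qed.
Lemma eq_lr (A B : eqType) (a : A) (b : B) : (inl a == inr b :> A + B) = false.
Proof. by []. Qed.
Lemma eq_rl (A B : eqType) (a : A) (b : B) : (inr b == inl a :> A + B) = false.
Proof. by []. Qed.

Set Implicit Arguments. Unset Strict Implicit. Unset Printing Implicit Defensive.

Definition Ge1 (p q : nat) := gjoin (complete_graph 2) (gunion (complete_graph p) (complete_graph q)).
Arguments Ge1 : clear implicits.
Definition Ge2 (d r q : nat) := gjoin (complete_graph d) (gunion (complete_graph r) (edgeless_graph q)).
Arguments Ge2 : clear implicits.

Section S.
Variable R : realType.

Lemma sum_ex k (a : 'I_k) (F : 'I_k -> R) c :
  (forall y, y != a -> F y = c) -> F a = 0 -> \sum_y F y = (k.-1)%:R * c.
Proof.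
move=> H Fa; rewrite (bigD1 a) //= Fa add0r.
under eq_bigr => y ya do rewrite (H y ya).
by rewrite sumr_const cardC1 card_ord mulr_natl.
Qed.

Lemma sum_c k (F : 'I_k -> R) c :
  (forall y, F y = c) -> \sum_y F y = k%:R * c.
Proof.
move=> H; under eq_bigr => y _ do rewrite H.
by rewrite sumr_const card_ord mulr_natl.
Qed.

Definition cls3 (A B C : finType) (al be ga : R) (x : A + (B + C)) : R :=
  match x with inl _ => al | inr (inl _) => be | inr (inr _) => ga end.



Ltac dsimp := rewrite /dd /Ge1 /Ge2 /gjoin /gunion /complete_graph /edgeless_graph /= ?eq_inr ?eq_inl ?eq_lr ?eq_rl ?eq_inr ?eq_inl ?eq_lr ?eq_rl /=.
Ltac side1 := move=> y /negbTE; dsimp; move=> -> /=; ring.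
Ltac side2 := move=> y; dsimp; ring.
Ltac side3 := dsimp; rewrite eqxx /=; ring.
Ltac side := first [ solve [side1] | solve [side2] | solve [side3] ].

Lemma G1_row (p q : nat) (al be ga : R) (x : 'I_2 + ('I_p + 'I_q)) :
  \sum_y cls3 al be ga y * (dd (Ge1 p q) y x)%:R =
  match x with
  | inl _ => al + p%:R * be + q%:R * ga
  | inr (inl _) => 2 * al + (p.-1)%:R * be + 2 * q%:R * ga
  | inr (inr _) => 2 * al + 2 * p%:R * be + (q.-1)%:R * ga
  end.
Proof.
rewrite big_sumType big_sumType /=.
case: x => [a|[a|a]].
- rewrite (@sum_ex 2 a _ al); [|side..]. rewrite (@sum_c _ _ be); [|side..].
  rewrite (@sum_c _ _ ga); [|side..]. simpl; ring.
- rewrite (@sum_c _ _ al); [|side..]; rewrite (@sum_ex _ a _ be); [|side..];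
  rewrite (@sum_c _ _ (2 * ga)); [|side..]; simpl; ring.
- rewrite (@sum_c _ _ al); [|side..]; rewrite (@sum_c _ _ (2 * be)); [|side..];
  rewrite (@sum_ex _ a _ ga); [|side..]; simpl; ring.
Qed.
Lemma G2_row (d r q : nat) (al be ga : R) (x : 'I_d + ('I_r + 'I_q)) :
  \sum_y cls3 al be ga y * (dd (Ge2 d r q) y x)%:R =
  match x with
  | inl _ => (d.-1)%:R * al + r%:R * be + q%:R * ga
  | inr (inl _) => d%:R * al + (r.-1)%:R * be + 2 * q%:R * ga
  | inr (inr _) => d%:R * al + 2 * r%:R * be + (q.-1)%:R * (2 * ga)
  end.
Proof.
rewrite big_sumType big_sumType /=.
case: x => [a|[a|a]].
- rewrite (@sum_ex _ a _ al); [|side..]. rewrite (@sum_c _ _ be); [|side..].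
  rewrite (@sum_c _ _ ga); [|side..]. simpl; ring.
- rewrite (@sum_c _ _ al); [|side..]; rewrite (@sum_ex _ a _ be); [|side..];
  rewrite (@sum_c _ _ (2 * ga)); [|side..]; simpl; ring.
- rewrite (@sum_c _ _ al); [|side..]; rewrite (@sum_c _ _ (2 * be)); [|side..];
  rewrite (@sum_ex _ a _ (2 * ga)); [|side..]; simpl; ring.
Qed.
End S.

Set Implicit Arguments. Unset Strict Implicit. Unset Printing Implicit Defensive.

Lemma eig_of (R : realType) (T : finType) (e : rel T) (f : T -> R) a (x0 : T) :
  (forall x y, gdist e x y = gdist e y x) ->
  (forall x, 0 < f x) ->
  (forall x, \sum_y f y * (gdist e y x)%:R = a * f x) ->
  is_largest_eigenvalue (dist_matrix R e) a.
Proof.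
move=> hs hp he.
apply: (@perron _ _ _ (\row_j f (enum_val j)) a (enum_rank x0)).
- by move=> i j; rewrite mxE ler0n.
- by move=> i j; rewrite !mxE hs.
- by move=> j; rewrite mxE.
apply/rowP => j; rewrite !mxE.
under eq_bigr do rewrite !mxE.
rewrite -(big_enum_val (fun y => f y * (gdist e y (enum_val j))%:R)) /=.
by rewrite -he; apply: eq_bigl.
Qed.

Lemma dd_sym (T : finType) (e : rel T) x y : (forall x y, e x y = e y x) -> dd e x y = dd e y x.
Proof. by move=> h; rewrite /dd eq_sym h. Qed.

Lemma join_diam (T1 T2 : finType) (e1 : rel T1) (e2 : rel T2) (z1 : T1) :
  (forall a b, a != b -> e1 a b) -> forall x y, x != y -> ~~ gjoin e1 e2 x y ->
  exists z, gjoin e1 e2 x z && gjoin e1 e2 z y.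
Proof.
move=> h [a|a] [b|b] //=.
- by rewrite eq_inl => /h ->.
- by move=> _ _; exists (inl z1).
Qed.

Lemma Ge1_sym p q x y : Ge1 p q x y = Ge1 p q y x.
Proof.
by case: x => [a|[a|a]]; case: y => [b|[b|b]]; rewrite /Ge1 /= /complete_graph // eq_sym.
Qed.

Lemma Ge2_sym d r q x y : Ge2 d r q x y = Ge2 d r q y x.
Proof.
by case: x => [a|[a|a]]; case: y => [b|[b|b]]; rewrite /Ge2 /= /complete_graph // eq_sym.
Qed.

Set Implicit Arguments. Unset Strict Implicit. Unset Printing Implicit Defensive.

Lemma gd1 p q x y : (0 < p)%N -> gdist (Ge1 p q) x y = dd (Ge1 p q) x y.
Proof.
move=> p0; apply: gdist_char.
  by rewrite !card_sum !card_ord; lia.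
by rewrite /Ge1; apply: (join_diam ord0).
Qed.

Lemma gd2 d r q x y : (0 < d)%N -> (2 < d)%N -> gdist (Ge2 d r q) x y = dd (Ge2 d r q) x y.
Proof.
move=> d0 d2; apply: gdist_char.
  by rewrite !card_sum !card_ord; lia.
by rewrite /Ge2; apply: (join_diam (Ordinal d0)).
Qed.

Definition cub1 (R : realType) (p q l : R) : R :=
  l * ((l - p - 1) * (l + 1)) -
  (2 * (q * (l + p + 1)) + 2 * p * (2 * q * l) + (q - 1) * ((l - p - 1) * (l + 1))).

Lemma G1_main (R : realType) (p q : nat) (l : R) :
  (0 < p)%N -> (0 < q)%N -> p%:R + 1 < l -> cub1 p%:R q%:R l = 0 ->
  is_largest_eigenvalue (dist_matrix R (Ge1 p q)) l.
Proof.
move=> p0 q0 lp hc.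
have l0 : 0 < l by apply: lt_trans lp; rewrite ltr_wpDl // ler0n.
have qp : 0 < q%:R :> R by rewrite ltr0n.
have pp : 0 < p%:R :> R by rewrite ltr0n.
have ep : (p.-1)%:R = p%:R - 1 :> R by rewrite -subn1 natrB.
have eq : (q.-1)%:R = q%:R - 1 :> R by rewrite -subn1 natrB.
apply: (@eig_of _ _ _ (cls3 (q%:R * (l + p%:R + 1)) (2 * q%:R * l) ((l - p%:R - 1) * (l + 1))) l (inl ord0)).
- by move=> x y; rewrite !gd1 // dd_sym //; exact: Ge1_sym.
- case => [a|[a|a]] /=.
  + by apply: mulr_gt0 => //; lra.
  + by apply: mulr_gt0 => //; lra.
  + by apply: mulr_gt0; lra.
- move=> x; under eq_bigr => y _ do rewrite gd1 //.
  rewrite G1_row; case: x => [a|[a|a]] /=; rewrite ?ep ?eq.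
  + ring.
  + ring.
  + move: hc; rewrite /cub1 => hc.
    apply/eqP; rewrite -subr_eq0; apply/eqP.
    transitivity (- 0 : R); last by rewrite oppr0.
    rewrite -hc; ring.
Qed.

Definition cub2 (R : realType) (d r q l : R) : R :=
  l * ((l - d - r + 1) * (l + 1)) -
  (d * (q * (l + r + 1)) + 2 * r * (q * (2 * l - d + 2)) + (q - 1) * (2 * ((l - d - r + 1) * (l + 1)))).

Lemma G2_main (R : realType) (d r q : nat) (l : R) :
  (2 < d)%N -> (0 < r)%N -> (0 < q)%N -> d%:R + r%:R - 1 < l -> cub2 d%:R r%:R q%:R l = 0 ->
  is_largest_eigenvalue (dist_matrix R (Ge2 d r q)) l.
Proof.
move=> d2 r0 q0 lp hc.
have d0 : (0 < d)%N by apply: leq_trans d2.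
have qp : 0 < q%:R :> R by rewrite ltr0n.
have rp : 0 < r%:R :> R by rewrite ltr0n.
have dp : 2 < d%:R :> R by rewrite ltr_nat.
have l0 : 0 < l by lra.
have ed : (d.-1)%:R = d%:R - 1 :> R by rewrite -subn1 natrB.
have er : (r.-1)%:R = r%:R - 1 :> R by rewrite -subn1 natrB.
have eq : (q.-1)%:R = q%:R - 1 :> R by rewrite -subn1 natrB.
apply: (@eig_of _ _ _ (cls3 (q%:R * (l + r%:R + 1)) (q%:R * (2 * l - d%:R + 2)) ((l - d%:R - r%:R + 1) * (l + 1))) l (inl (Ordinal d0))).
- by move=> x y; rewrite !gd2 // dd_sym //; exact: Ge2_sym.
- case => [a|[a|a]] /=.
  + by apply: mulr_gt0 => //; lra.
  + by apply: mulr_gt0 => //; lra.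
  + by apply: mulr_gt0; lra.
- move=> x; under eq_bigr => y _ do rewrite gd2 //.
  rewrite G2_row; case: x => [a|[a|a]] /=; rewrite ?ed ?er ?eq.
  + ring.
  + ring.
  + move: hc; rewrite /cub2 => hc.
    apply/eqP; rewrite -subr_eq0; apply/eqP.
    transitivity (- 0 : R); last by rewrite oppr0.
    rewrite -hc; ring.
Qed.

Set Implicit Arguments. Unset Strict Implicit. Unset Printing Implicit Defensive.

Section Ineq.
Variable R : realType.

Definition g1 (N Dd l : R) := l^+3 + (3 - N) * l^+2 + (N - 3 * N * Dd + 3 * Dd^+2) * l + Dd^+2 - N * Dd.
Definition g2 (N Dd l : R) := l^+3 + (5 - N - Dd) * l^+2 + (-2 * N * Dd - N + 5 * Dd^+2 - 8 * Dd + 8) * l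
  + (N * Dd^+2 - 3 * N * Dd - 2 * Dd^+3 + 8 * Dd^+2 - 8 * Dd + 4).
Definition qq (N Dd l : R) := -l^+2 + (N + 2 * Dd - 4) * l + N * Dd - (2 * Dd^+2 - 3 * Dd + 2).
Definition lam2 (N Dd : R) := N + 3 * Dd - 4 - 6 * Dd * (Dd-1)/N.

Lemma pos_add (x y : R) : 0 < x -> 0 <= y -> 0 < x + y.
Proof. move=> hx hy; lra. Qed.

Ltac pos := repeat match goal with
 | |- is_true (0 < _ + _) => apply: pos_add
 | |- is_true (0 <= _ + _) => apply: addr_ge0
 | |- is_true (0 <= _ * _) => apply: mulr_ge0
 | |- is_true (0 < _ * _) => apply: mulr_gt0
 | |- is_true (0 <= _) => first [assumption | by rewrite ler0n | lra]
 | |- is_true (0 < _) => first [by rewrite ltr0n | lra]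
end.

Lemma ineqA (m k N Dd : R) : 0 <= m -> 0 <= k ->
  Dd = 3 + k -> N = 8 * Dd - 7 + m -> 0 < - g1 N Dd (N - Dd).
Proof.
move=> hm hk eD eN.
have -> : - g1 N Dd (N - Dd) = (((1 * 10 + 5) * 10 + 6) * 10 + 8) + (((2 * 10 + 3) * 10 + 5) * 10 + 2) * k + (((1 * 10 + 1) * 10 + 7) * 10 + 6) * k * k + 196 * k * k * k + 224 * m + 224 * m * k + 56 * m * k * k + 8 * m * m + 4 * m * m * k.
  rewrite /g1 /g2 /qq /lam2 eN eD; ring.
pos.
Qed.

Lemma ineqB (m k N Dd : R) : 0 <= m -> 0 <= k ->
  Dd = 3 + k -> N = 8 * Dd - 7 + m -> 0 < N ^+ 3 * g1 N Dd (lam2 N Dd).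
Proof.
move=> hm hk eD eN.
have -> : N ^+ 3 * g1 N Dd (lam2 N Dd) = (((((5 * 10 + 7) * 10 + 0) * 10 + 7) * 10 + 1) * 10 + 6) + ((((((1 * 10 + 7) * 10 + 7) * 10 + 2) * 10 + 2) * 10 + 6) * 10 + 2) * k + ((((((2 * 10 + 2) * 10 + 9) * 10 + 0) * 10 + 5) * 10 + 7) * 10 + 6) * k * k + ((((((1 * 10 + 5) * 10 + 7) * 10 + 7) * 10 + 4) * 10 + 7) * 10 + 4) * k * k * k + (((((6 * 10 + 1) * 10 + 0) * 10 + 6) * 10 + 2) * 10 + 0) * k * k * k * k + (((((1 * 10 + 2) * 10 + 5) * 10 + 9) * 10 + 8) * 10 + 0) * k * k * k * k * k + ((((1 * 10 + 0) * 10 + 8) * 10 + 2) * 10 + 4) * k * k * k * k * k * k + (((((2 * 10 + 3) * 10 + 6) * 10 + 5) * 10 + 7) * 10 + 6) * m + (((((5 * 10 + 9) * 10 + 1) * 10 + 1) * 10 + 9) * 10 + 6) * m * k + (((((5 * 10 + 9) * 10 + 1) * 10 + 3) * 10 + 3) * 10 + 0) * m * k * k + (((((2 * 10 + 9) * 10 + 5) * 10 + 9) * 10 + 3) * 10 + 4) * m * k * k * k + ((((7 * 10 + 4) * 10 + 1) * 10 + 0) * 10 + 4) * m * k * k * k * k + (((7 * 10 + 4) * 10 + 2) * 10 + 8) * m * k * k * k * k * k + ((((3 * 10 + 0) * 10 + 8) * 10 + 8) * 10 + 8) * m * m + ((((6 * 10 + 0) * 10 + 3) * 10 + 3) * 10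 + 6) * m * m * k + ((((4 * 10 + 4) * 10 + 2) * 10 + 2) * 10 + 6) * m * m * k * k + ((((1 * 10 + 4) * 10 + 4) * 10 + 1) * 10 + 8) * m * m * k * k * k + (((1 * 10 + 7) * 10 + 6) * 10 + 4) * m * m * k * k * k * k + (((1 * 10 + 6) * 10 + 0) * 10 + 0) * m * m * m + (((2 * 10 + 2) * 10 + 9) * 10 + 2) * m * m * m * k + (((1 * 10 + 0) * 10 + 9) * 10 + 4) * m * m * m * k * k + 174 * m * m * m * k * k * k + 28 * m * m * m * m + 26 * m * m * m * m * k + 6 * m * m * m * m * k * k.
  rewrite /g1 /g2 /qq /lam2 eN eD; field; apply: lt0r_neq0; lra.
pos.
Qed.

Lemma ineqC (m k N Dd : R) : 0 <= m -> 0 <= k ->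
  Dd = 3 + k -> N = 8 * Dd - 7 + m -> 0 < - g2 N Dd (N - Dd).
Proof.
move=> hm hk eD eN.
have -> : - g2 N Dd (N - Dd) = (((1 * 10 + 4) * 10 + 5) * 10 + 8) + (((2 * 10 + 1) * 10 + 3) * 10 + 3) * k + (((1 * 10 + 0) * 10 + 4) * 10 + 0) * k * k + 169 * k * k * k + 216 * m + 212 * m * k + 52 * m * k * k + 8 * m * m + 4 * m * m * k.
  rewrite /g1 /g2 /qq /lam2 eN eD; ring.
pos.
Qed.

Lemma ineqD (m k N Dd : R) : 0 <= m -> 0 <= k ->
  Dd = 3 + k -> N = 8 * Dd - 7 + m -> 0 < qq N Dd (N - Dd).
Proof.
move=> hm hk eD eN.
have -> : qq N Dd (N - Dd) = 110 + 109 * k + 27 * k * k + 8 * m + 4 * m * k.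
  rewrite /g1 /g2 /qq /lam2 eN eD; ring.
pos.
Qed.

Lemma ineqE (m k N Dd : R) : 0 <= m -> 0 <= k ->
  Dd = 3 + k -> N = 8 * Dd - 7 + m -> 0 < N ^+ 2 * qq N Dd (lam2 N Dd).
Proof.
move=> hm hk eD eN.
have -> : N ^+ 2 * qq N Dd (lam2 N Dd) = (((6 * 10 + 4) * 10 + 9) * 10 + 0) + ((((1 * 10 + 1) * 10 + 4) * 10 + 1) * 10 + 5) * k + (((7 * 10 + 4) * 10 + 2) * 10 + 9) * k * k + (((2 * 10 + 1) * 10 + 1) * 10 + 2) * k * k * k + 220 * k * k * k * k + 628 * m + 782 * m * k + 314 * m * k * k + 40 * m * k * k * k + 10 * m * m + 7 * m * m * k + 1 * m * m * k * k.
  rewrite /g1 /g2 /qq /lam2 eN eD; field; apply: lt0r_neq0; lra.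
pos.
Qed.

Lemma ineqF (m k N Dd : R) : 0 <= m -> 0 <= k ->
  Dd = 3 + k -> N = 8 * Dd - 7 + m -> 0 < N * (lam2 N Dd - (N - Dd)).
Proof.
move=> hm hk eD eN.
have -> : N * (lam2 N Dd - (N - Dd)) = 100 + 102 * k + 26 * k * k + 8 * m + 4 * m * k.
  rewrite /g1 /g2 /qq /lam2 eN eD; field; apply: lt0r_neq0; lra.
pos.
Qed.
End Ineq.

Unset Implicit Arguments.

Lemma cubic_ivt (R : realType) (c2 c1 c0 a b : R) : a <= b ->
  (a^+3 + c2 * a^+2 + c1 * a + c0) * (b^+3 + c2 * b^+2 + c1 * b + c0) < 0 ->
  exists x, a < x < b /\ x^+3 + c2 * x^+2 + c1 * x + c0 = 0.
Proof.
move=> hab hs.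
pose p : {poly R} := 'X^3 + c2%:P * 'X^2 + c1%:P * 'X + c0%:P.
have hp y : p.[y] = y^+3 + c2 * y^+2 + c1 * y + c0 by rewrite /p !hornerE; ring.
have hs' : p.[a] * p.[b] < 0 by rewrite !hp.
have [x hx hr] := poly_ivtoo hab hs'.
exists x; split; first by move: hx; rewrite in_itv.
by move: hr => /rootP; rewrite hp.
Qed.

Theorem mainTheorem7 (R : realType) (delta n : nat) :
  (3 <= delta)%N -> (8 * delta - 7 <= n)%N ->
  exists a b : R,
    is_largest_eigenvalue
      (dist_matrix R (gjoin (complete_graph 2%N)
                        (gunion (complete_graph (n - delta - 1)%N) (complete_graph (delta - 1)%N)))) a /\
    is_largest_eigenvalue
      (dist_matrix R (gjoin (complete_graph delta)
                        (gunion (complete_graph (n - 2 * delta + 1)%N) (edgeless_graph (delta - 1)%N)))) b /\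
    b < a.
Proof.
move=> d3 hn.
have l1 : (delta <= n)%N by lia.
have l2 : (1 <= n - delta)%N by lia.
have l3 : (1 <= delta)%N by lia.
have l4 : (2 * delta <= n)%N by lia.
have n1 : (0 < n - delta - 1)%N by lia.
have n2 : (0 < delta - 1)%N by lia.
have n3 : (2 < delta)%N by lia.
have n4 : (0 < n - 2 * delta + 1)%N by lia.
have n5 : (7 <= 8 * delta)%N by lia.
pose N : R := n%:R. pose Dd : R := delta%:R.
have hD3 : 3 <= Dd by rewrite /Dd (ler_nat R 3 delta).
have hN : 8 * Dd - 7 <= N.
  have := hn; rewrite -(ler_nat R) natrB //.
  by rewrite natrM.
pose m := N - 8 * Dd + 7. pose k := Dd - 3.
have hm : 0 <= m by rewrite /m; lra.
have hk : 0 <= k by rewrite /k; lra.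
have eD : Dd = 3 + k by rewrite /k; ring.
have eN : N = 8 * Dd - 7 + m by rewrite /m; ring.
have hN0 : 0 < N by lra.
have iA := ineqA hm hk eD eN.
have iB := ineqB hm hk eD eN.
have iC := ineqC hm hk eD eN.
have iD := ineqD hm hk eD eN.
have iE := ineqE hm hk eD eN.
have iF := ineqF hm hk eD eN.
set L := lam2 N Dd in iB iE iF.
set s := N - Dd in iA iC iD iF.
rewrite pmulr_rgt0 // subr_gt0 in iF.
rewrite pmulr_rgt0 ?exprn_gt0 // in iB.
rewrite pmulr_rgt0 ?exprn_gt0 // in iE.
rewrite oppr_gt0 in iA. rewrite oppr_gt0 in iC.
have [a [/andP[sa aL] ga]] : exists a, s < a < L /\ g1 N Dd a = 0.
  have := @cubic_ivt R (3 - N) (N - 3 * N * Dd + 3 * Dd ^+ 2) (Dd ^+ 2 - N * Dd) s L (ltW iF).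
  move: iA iB; rewrite /g1 => iA iB.
  case.
    by rewrite -!addrA; nra.
  by move=> x [hx hx0]; exists x; split => //; rewrite -hx0; ring.
have qa : 0 < qq N Dd a.
  have e : (L - s) * qq N Dd a = (L - a) * qq N Dd s + (a - s) * qq N Dd L + (L - s) * (a - s) * (L - a)
    by rewrite /qq; ring.
  have : 0 < (L - s) * qq N Dd a.
    rewrite e; apply: pos_add; first apply: pos_add.
    - by apply: mulr_gt0 => //; lra.
    - by apply: mulr_ge0; lra.
    - by apply: mulr_ge0; [apply: mulr_ge0|]; lra.
  by rewrite pmulr_rgt0 // subr_gt0.
have g2a : 0 < g2 N Dd a.
  have -> : g2 N Dd a = g1 N Dd a + (Dd - 2) * qq N Dd a by rewrite /g1 /g2 /qq; ring.
  by rewrite ga add0r; apply: mulr_gt0 => //; lra.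
have [b [/andP[sb ba] gb]] : exists b, s < b < a /\ g2 N Dd b = 0.
  have := @cubic_ivt R (5 - N - Dd) (-2 * N * Dd - N + 5 * Dd ^+ 2 - 8 * Dd + 8)
     (N * Dd ^+ 2 - 3 * N * Dd - 2 * Dd ^+ 3 + 8 * Dd ^+ 2 - 8 * Dd + 4) s a (ltW sa).
  move: iC g2a; rewrite /g2 => iC g2a.
  case.
    by nra.
  by move=> x [hx hx0]; exists x; split => //; rewrite -hx0; ring.
have cp : ((n - delta - 1)%N%:R : R) = N - Dd - 1.
  by rewrite natrB // natrB.
have cq : ((delta - 1)%N%:R : R) = Dd - 1.
  by rewrite natrB.
have cr : ((n - 2 * delta + 1)%N%:R : R) = N - 2 * Dd + 1.
  by rewrite natrD natrB // natrM.
exists a, b; split; [|split].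
- apply: (@G1_main R (n - delta - 1) (delta - 1) a) => //.
  + by rewrite cp; rewrite /s in sa; lra.
  + by rewrite /cub1 cp cq; rewrite -ga /g1; ring.
- apply: (@G2_main R delta (n - 2 * delta + 1) (delta - 1) b) => //.
  + by rewrite cr; rewrite /s in sb; lra.
  + by rewrite /cub2 cr cq; rewrite -gb /g2; ring.
- exact: ba.
Qed.
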